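(* The generating series $g(q;x)=\sum_\gamma q^{\omega_H(\gamma)+\omega_{DU}(\gamma)}x^{n(\gamma)}$, where $\gamma$ ranges over all Grand Schröder paths and $n(\gamma)$ is the semi-length, is $$g(q;x)=\frac{1}{\sqrt{1-2(1+2q)x+(1-2q)^2x^2}}.$$
   Context: Steps: $U=(1,1)$, $D=(1,-1)$, $H=(2,0)$. A Grand Schröder path of semi-length $n$ is any lattice path from $(0,0)$ to $(2n,0)$ with steps $U,D,H$. Paths are identified with words of steps; $\omega_H(\gamma)$ is the number of $H$ steps and $\omega_{DU}(\gamma)$ the number of occurrences of the factor $DU$ in $\gamma$. *)

(* Defs.v *)
From HB Require Import structures.
From mathcomp Require Import all_boot all_order all_algebra.
Set Implicit Arguments. Unset Strict Implicit. Unset Printing Implicit Defensive.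
Import GRing.Theory.
Local Open Scope ring_scope.

(* Steps U=(1,1), D=(1,-1), H=(2,0). *)
Inductive step := U | D | H.

Definition step_eqb (a b : step) : bool :=
  match a, b with U, U | D, D | H, H => true | _, _ => false end.
Lemma step_eqP : Equality.axiom step_eqb.
Proof. by case; case; constructor. Qed.
HB.instance Definition _ := hasDecEq.Build step step_eqP.

Definition width (s : step) : nat := if s is H then 2 else 1.

Fixpoint words (k : nat) : seq (seq step) :=
  if k is k'.+1 then [seq s :: w | s <- [:: U; D; H], w <- words k'] else [:: [::]].

(* a word is a Grand Schroeder path of semi-length n iff it goes from (0,0)
   to (2n,0): total width 2n and final height 0 (#U = #D). *)
Definition is_grand_schroeder (n : nat) (w : seq step) : bool :=
  (sumn (map width w) == n.*2) && (count_mem U w == count_mem D w).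

(* list of all Grand Schroeder paths of semi-length n (each exactly once;
   such a path has at most 2n steps) *)
Definition grand_paths (n : nat) : seq (seq step) :=
  [seq w <- flatten [seq words k | k <- iota 0 n.*2.+1] | is_grand_schroeder n w].

Definition omegaH (w : seq step) : nat := count_mem H w.
Definition omegaDU (w : seq step) : nat :=
  count (fun p : step * step => (p.1 == D) && (p.2 == U)) (zip w (behead w)).

(* coefficient of x^n in g(q;x), as a polynomial in q *)
Definition gcoef (n : nat) : {poly int} :=
  \sum_(w <- grand_paths n) 'X^(omegaH w + omegaDU w).

(* formal power series in x with coefficients in Z[q], as coefficient functions *)
Definition series := nat -> {poly int}.
Definition series_mul (f g : series) : series :=
  fun n => \sum_(i < n.+1) f i * g (n - i)%N.
Definition series_one : series := fun n => if n == 0%N then 1 else 0.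

Definition Pser : series := fun n =>
  if n == 0%N then 1
  else if n == 1%N then - (2%:R * (1 + 2%:R * 'X))
  else if n == 2%N then (1 - 2%:R * 'X) ^+ 2
  else 0.

(* f = 1/sqrt(P) as formal power series: f is the (unique) series with
   constant term 1 whose square times P equals 1. *)
Definition is_inv_sqrt (f P : series) : Prop :=
  f 0%N = 1 /\ series_mul (series_mul f f) P = series_one.

(* Main.v *)
Require Import Defs.
From mathcomp Require Import all_boot all_order all_algebra.
From mathcomp Require Import ring lra zify.
Import GRing.Theory.

Fixpoint wtc (b : bool) (w : seq step) : nat :=
  if w is s :: w' then ((match s with H => 1 | U => nat_of_bool b | D => 0 end) + wtc (s == D) w')%N
  else 0%N.

Definition headU (w : seq step) : bool := if w is U :: _ then true else false.

Lemma omegaDU_cons s w : omegaDU (s :: w) = ((s == D) && headU w) + omegaDU w.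
Proof. by case: w => [|t w]; rewrite /omegaDU //=; case: s; try case: t. Qed.

Lemma wtc_omega b w : wtc b w = (b && headU w) + (omegaH w + omegaDU w).
Proof.
elim: w b => [|s w IH] b; first by case: b.
rewrite omegaDU_cons /= IH /omegaH /=.
by case: s; case: b; case: (headU w) => /=; lia.
Qed.

Lemma words_S k : words k.+1 =
  [seq U :: w | w <- words k] ++ [seq D :: w | w <- words k] ++ [seq H :: w | w <- words k].
Proof. by rewrite /= cats0. Qed.

Lemma size_words k w : w \in words k -> size w = k.
Proof.
elim: k w => [|k IH] w; first by rewrite inE => /eqP ->.
by rewrite words_S !mem_cat => /or3P [] /mapP [w' /IH <- ->].
Qed.

Lemma eqstepE (a b : step) : (a == b) = step_eqb a b.
Proof. by []. Qed.

Lemma countUD w : count_mem U w + count_mem D w <= size w.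
Proof. elim: w => [|s w IH] //=; case: s => /=; move: IH; set a := count_mem U w; set b := count_mem D w; set c := size w; lia. Qed.

Definition cnt k b u d F :=
  count (fun w => [&& count_mem U w == u, count_mem D w == d & wtc b w == F]) (words k).

Lemma count0 (T : Type) (a : pred T) s : (forall x, a x = false) -> count a s = 0.
Proof. by move=> h; elim: s => [|x s IH] //=; rewrite h IH. Qed.

Lemma cnt_S k b u d F : cnt k.+1 b u d F =
  (if u is u'.+1 then (if b then (if F is F'.+1 then cnt k false u' d F' else 0)
                      else cnt k false u' d F) else 0)
  + (if d is d'.+1 then cnt k true u d' F else 0)
  + (if F is F'.+1 then cnt k false u d F' else 0).
Proof.
rewrite /cnt words_S !count_cat !count_map addnA; congr (_ + _ + _).
- case: u => [|u]; first by apply: count0.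
  case: b; last by apply: eq_count => w /=.
  case: F => [|F]; first by apply: count0 => w /=; rewrite !andbF.
  by apply: eq_count => w /=.
- case: d => [|d]; first by apply: count0 => w /=; rewrite ?andbF.
  by apply: eq_count => w /=.
- case: F => [|F]; first by apply: count0 => w /=; rewrite !andbF.
  by apply: eq_count => w /=.
Qed.

Lemma cnt_big k b u d F : k < u + d -> cnt k b u d F = 0.
Proof.
move=> hk; apply/eqP; rewrite -leqn0 leqNgt -has_count; apply/hasPn => w hw.
apply/negP => /and3P [/eqP hu /eqP hd _].
have := countUD w; rewrite (@size_words _ _ hw) hu hd; lia.
Qed.

Lemma cnt0 b u d F : cnt 0 b u d F = [&& u == 0, d == 0 & F == 0].
Proof. by rewrite /cnt /= addn0 !(eq_sym 0). Qed.

Lemma cnt_TF k u d F :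
  cnt k.+1 true u d F + (if u is u'.+1 then cnt k false u' d F else 0) =
  cnt k.+1 false u d F + (if u is u'.+1 then (if F is F'.+1 then cnt k false u' d F' else 0) else 0).
Proof. rewrite !cnt_S; case: u => [|u]; case: F => [|F]; lia. Qed.

Definition c (u d e F : nat) := 'C(F, e) * 'C(u + e, F) * 'C(d + e, F).

Lemma bin_sym0 a b : 'C(a, b) * 'C(b, a) = (a == b).
Proof.
case: (ltngtP a b) => h; first by rewrite bin_small.
  by rewrite (bin_small h) muln0.
by rewrite h binn.
Qed.

Lemma c_u0 d e F : c 0 d e F = (F == e) * 'C(d + e, e).
Proof. by rewrite /c add0n bin_sym0; case: eqP => [->|]. Qed.

Lemma c_d0 u e F : c u 0 e F = (F == e) * 'C(u + e, e).
Proof. by rewrite /c add0n mulnAC bin_sym0; case: eqP => [->|]. Qed.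

Lemma c_rec u d' e F T :
  T + (if u is u'.+1 then c u' d' e F else 0) =
    c u d' e F + (if u is u'.+1 then (if F is F'.+1 then c u' d' e F' else 0) else 0) ->
  c u d'.+1 e F = (if u is u'.+1 then c u' d'.+1 e F else 0) + T +
    (if e is e'.+1 then (if F is F'.+1 then c u d'.+1 e' F' else 0) else 0).
Proof.
case: u => [|u].
  case: e => [|e]; case: F => [|F] => hT; rewrite ?c_u0 /= ?eqSS ?bin0 ?addn0 ?add0n ?mul1n ?mul0n in hT *; try lia.
  rewrite hT; case: (F == e); rewrite ?mul0n ?mul1n // !addSn !addnS binS; lia.
rewrite /c; case: e => [|e]; case: F => [|F];
  rewrite ?addn0 ?add0n ?addSn ?addnS ?binS ?bin0 ?bin0n /=; lia.
Qed.

Lemma c_rec0 u e F : 0 < u + e ->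
  c u 0 e F = (if u is u'.+1 then c u' 0 e F else 0) +
    (if e is e'.+1 then (if F is F'.+1 then c u 0 e' F' else 0) else 0).
Proof.
move=> h; case: u h => [|u] h; case: e h => [|e] h; case: F => [|F];
  rewrite ?c_d0 /= ?eqSS ?bin0 ?addn0 ?add0n ?mul1n ?mul0n ?muln0 ?muln1 //; try lia.
all: case: (F == e); rewrite ?mul0n ?mul1n ?addSn ?addnS ?binS //; try lia.
all: by rewrite bin_small.
Qed.

Lemma cnt_closed n : forall k, k <= n -> forall u d e F, u + d + e = k ->
  cnt k false u d F = c u d e F.
Proof.
elim: n => [|n IH] k hk u d e F hs.
  have [-> -> ->] : [/\ u = 0, d = 0 & e = 0] by split; lia.
  have -> : k = 0 by lia.
  by rewrite cnt0 /c bin0 bin0n; case: F.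
case: (ltnP k n.+1) => hkn; first by apply: IH => //; lia.
have {hkn} hk' : k = n.+1 by lia.
rewrite hk' in hs *.
rewrite cnt_S.
have hU : (if u is u'.+1 then cnt n false u' d F else 0) =
          (if u is u'.+1 then c u' d e F else 0).
  by case: u hs => [|u] hs //; apply: (IH n (leqnn n)); lia.
have hH : (if F is F'.+1 then cnt n false u d F' else 0) =
     (if e is e'.+1 then (if F is F'.+1 then c u d e' F' else 0) else 0).
  clear hU; case: F => [|F]; first by case: e hs.
  case: e hs => [|e] hs; first by apply: cnt_big; lia.
  by apply: (IH n (leqnn n)); lia.
case: d hs hU hH => [|d] hs hU hH; rewrite hU hH.
  by rewrite addn0; symmetry; apply: c_rec0; lia.
symmetry; apply: c_rec.
clear hU hH hk; case: n IH hk' hs => [|n] IH hk' hs.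
  have [-> -> ->] : [/\ u = 0, d = 0 & e = 0] by split; lia.
  by rewrite cnt0 /c bin0 bin0n; case: F.
have := cnt_TF n u d F.
rewrite (IH n.+1 (leqnn _) u d e F) //; last lia.
case: u hs => [|u] hs; first by rewrite !addn0.
rewrite (IH n (leqnSn _) u d e F) //; last lia.
case: F => [|F] //.
rewrite (IH n (leqnSn _) u d e F) //; lia.
Qed.

Lemma sum_bool_count (T : Type) (P : pred T) s : \sum_(x <- s) (P x : nat) = count P s.
Proof. by elim: s => [|x s IH]; rewrite ?big_nil ?big_cons ?IH. Qed.

Lemma count_andl (T : Type) (b : bool) (P : pred T) s :
  count (fun x => b && P x) s = b * count P s.
Proof. by case: b; rewrite ?mul1n ?mul0n //; apply: count0. Qed.

Lemma sum_pick m a (Q : nat -> bool) :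
  \sum_(u < m) (((u : nat) == a) && Q u : nat) = ((a < m) && Q a).
Proof.
elim: m => [|m IH]; first by rewrite big_ord0.
rewrite big_ord_recr /= IH.
case: (ltngtP a m) => h.
- by rewrite /= ltnS ltnW // addn0.
- by rewrite /= ltnS leqNgt h.
- by rewrite h ltnSn /=.
Qed.

Lemma widthE w : sumn (map width w) = size w + count_mem H w.
Proof. elim: w => [|s w IH] //=; rewrite IH; case: s => /=; lia. Qed.

Lemma sizeE w : size w = count_mem U w + count_mem D w + count_mem H w.
Proof.
elim: w => [|s w IH] //=; rewrite IH; case: s => /=;
 set a := count_mem U w; set b := count_mem D w; set h := count_mem H w; lia.
Qed.

Lemma grand_iff a b h n : [&& a < n.+1, a + n == a + b + h & b == a] =
  ((a + b + h + h == n.*2) && (a == b)).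
Proof.
rewrite -muln2; apply/idP/idP.
  by case/and3P => h1 /eqP h2 /eqP h3; apply/andP; split; apply/eqP; lia.
by case/andP => /eqP h1 /eqP h2; apply/and3P; split; [|apply/eqP|apply/eqP]; lia.
Qed.

Lemma count_words_k n F k :
  count (predI (fun w => wtc false w == F) (is_grand_schroeder n)) (words k) =
  \sum_(u < n.+1) ((u + n == k) * cnt k false u u F).
Proof.
rewrite -sum_bool_count.
transitivity (\sum_(w <- words k) \sum_(u < n.+1)
   (((u : nat) == count_mem U w) && ((count_mem U w + n == k) && [&& count_mem U w == u, count_mem D w == u & wtc false w == F]) : nat)).
  rewrite big_seq_cond [RHS]big_seq_cond; apply: eq_bigr => w /andP [hw _].
  rewrite (sum_pick _ _ (fun u => (count_mem U w + n == k) && [&& count_mem U w == u, count_mem D w == u & wtc false w == F])) /= /is_grand_schroeder widthE.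
  rewrite (sizeE w) in hw *.
  rewrite -(@size_words _ _ hw) sizeE eqxx /=.
  set a := count_mem U w; set b := count_mem D w; set h := count_mem H w.
  rewrite -grand_iff (eq_sym b).
  by case: (wtc false w == F); rewrite ?andbT ?andbF.
rewrite exchange_big /=; apply: eq_bigr => u _.
rewrite /cnt -count_andl -sum_bool_count; apply: eq_bigr => w _.
case: ((u : nat) =P count_mem U w) => [->|/eqP h]; first by rewrite !eqxx.
rewrite /=; case: (count_mem U w =P u) => [e|_]; last by rewrite /= andbF.
by rewrite e eqxx in h.
Qed.

Lemma sum_iota_pick (G : nat -> nat) a m : a < m ->
  \sum_(k <- iota 0 m) ((a == k) * G k) = G a.
Proof.
move=> ha.
rewrite (eq_bigr (fun k => (a == k) * G a)); last first.
  by move=> k _; case: eqP => [->|].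
rewrite -big_distrl /= sum_bool_count.
have -> : count (fun k => a == k) (iota 0 m) = count_mem a (iota 0 m).
  by apply: eq_count => k; rewrite eq_sym.
by rewrite count_uniq_mem ?iota_uniq // mem_iota ha mul1n.
Qed.

Lemma sum_binF F m : F < m -> \sum_(e < m) 'C(F, e) = 2 ^ F.
Proof.
move=> hF.
have -> : \sum_(e < m) 'C(F, e) = \sum_(e < m | e < F.+1) 'C(F, e).
  rewrite [RHS]big_mkcond /=; apply: eq_bigr => i _.
  by case: ifP => // /negbT; rewrite -leqNgt => h; rewrite bin_small.
rewrite -(big_ord_widen m (fun e => 'C(F, e))) //.
rewrite -[2]/(1 + 1) Pascal; apply: eq_bigr => i _.
by rewrite !exp1n !muln1.
Qed.

Lemma count_grand n F :
  count (fun w => wtc false w == F) (grand_paths n) = 'C(n, F) ^ 2 * 2 ^ F.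
Proof.
rewrite /grand_paths count_filter count_flatten sumnE !big_map.
rewrite (eq_bigr (fun k => \sum_(u < n.+1) ((u + n == k) * cnt k false u u F)));
  last by move=> k _; rewrite count_words_k.
rewrite exchange_big /=.
transitivity (\sum_(u < n.+1) c u u (n - u) F).
  apply: eq_bigr => u _.
  have hu := ltn_ord u.
  have e := @sum_iota_pick (fun k => cnt k false u u F) (u + n) n.*2.+1.
  rewrite /= in e; rewrite e; last by rewrite -muln2; lia.
  by apply: (cnt_closed _ _ (leqnn _)); lia.
rewrite /c (eq_bigr (fun u : 'I_n.+1 => 'C(F, n - u) * ('C(n, F) * 'C(n, F)))); last first.
  by move=> u _; rewrite subnKC ?mulnA // -ltnS ltn_ord.
rewrite -big_distrl /=.
rewrite (reindex_inj rev_ord_inj) /=.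
rewrite (eq_bigr (fun u : 'I_n.+1 => 'C(F, u))); last first.
  by move=> u _; rewrite subSS subKn // -ltnS ltn_ord.
case: (leqP F n) => hF.
  by rewrite sum_binF // mulnC -mulnn.
by rewrite bin_small // !muln0 mul0n.
Qed.

Lemma gcoef_coef n F : ((gcoef n)`_F = ((('C(n, F) ^ 2 * 2 ^ F)%N)%:R : int))%R.
Proof.
rewrite /gcoef coef_sum -count_grand -sum_bool_count natr_sum.
apply: eq_bigr => w _.
by rewrite coefXn wtc_omega /= add0n eq_sym.
Qed.

Lemma binG n j : (n + 2) * ('C(n, j.+2) * 'C(n, j)) + 'C(n, j.+2) * 'C(n, j.+1)
   + 'C(n, j.+1) * 'C(n, j) = n * ('C(n, j.+1) * 'C(n, j.+1)).
Proof.
case: (leqP n j) => h.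
  by rewrite (@bin_small n j.+1) ?(@bin_small n j.+2) ?muln0 ?mul0n //; lia.
have [N hN] : exists N, n = N + j.+1 by exists (n - j.+1); lia.
subst n.
have h1 := mul_bin_left (N + j.+1) j.+1.
have h2 := mul_bin_left (N + j.+1) j.
rewrite addnK in h1.
have e : N + j.+1 - j = N.+1 by lia.
rewrite e in h2; clear e.
move: h1 h2.
set x := 'C(_, j.+2); set y := 'C(_, j.+1); set z := 'C(_, j) => h1 h2.
apply/eqP; rewrite -(eqn_pmul2l (_ : 0 < j.+2 * N.+1)) //; apply/eqP.
transitivity ((N + j.+1 + 2) * ((j.+2 * x) * (N.+1 * z)) + N.+1 * y * (j.+2 * x)
   + j.+2 * y * (N.+1 * z)); first by ring.
rewrite h1 -h2; ring.
Qed.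

Local Open Scope ring_scope.

Definition pa : {poly int} := 1 + 2%:R * 'X.
Definition pb : {poly int} := (1 - 2%:R * 'X) ^+ 2.

Lemma coef_a p k : (pa * p)`_k = p`_k + (if k is k'.+1 then 2 * p`_k' else 0).
Proof.
rewrite /pa mulrDl mul1r -mulrA coefD mulr_natl coefMn coefXM.
by case: k => [|k] //=; rewrite ?mul0rn ?addr0 // mulr_natl.
Qed.

Lemma coef_b p k : (pb * p)`_k = p`_k - (if k is k'.+1 then 4 * p`_k' else 0)
   + (if k is k'.+2 then 4 * p`_k' else 0).
Proof.
have -> : pb * p = p - 4%:R * ('X * p) + 4%:R * ('X * ('X * p)) by rewrite /pb; ring.
rewrite coefD coefB !mulr_natl !coefMn !coefXM.
case: k => [|[|k]] /=; rewrite ?mul0rn ?subr0 ?addr0 ?coefXM //= !mulr_natl //.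
Qed.

Lemma grec n : (n.+2)%:R * gcoef n.+2 =
  (2 * n + 3)%:R * (pa * gcoef n.+1) - (n.+1)%:R * (pb * gcoef n).
Proof.
apply/polyP => k.
rewrite coefB !mulr_natl !coefMn coef_a coef_b !gcoef_coef.
case: k => [|[|j]] /=; rewrite ?gcoef_coef.
- rewrite !bin0 !expn0 !muln1 ?subr0 ?addr0. ring.
- rewrite !bin1 !bin0 !expn0 !expn1 !muln1; ring.
have G := binG n j.
rewrite !binS !expnS.
move: G; set x := 'C(n, j.+2); set y := 'C(n, j.+1); set z := 'C(n, j); set p := (2 ^ j)%N => G.
have G' := congr1 (fun t : nat => (t%:R : int) * (8 * p%:R)) G.
rewrite /= in G'.
move/eqP: G'; rewrite -subr_eq0 => /eqP H0.
apply/eqP; rewrite -subr_eq0; apply/eqP; rewrite -H0; ring.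
Qed.

From Stdlib Require Import FunctionalExtensionality.
Import Num.Theory.

Lemma natmul_cancel (m : nat) (p q : {poly int}) :
  (m.+1)%:R * p = (m.+1)%:R * q -> p = q.
Proof.
move=> h; apply/polyP => k.
have := congr1 (fun r : {poly int} => r`_k) h; rewrite /= !mulr_natl !coefMn.
exact: (pmulrnI (ltn0Sn m)).
Qed.

Lemma gcoef0 : gcoef 0 = 1.
Proof. by apply/polyP => k; rewrite gcoef_coef coef1; case: k. Qed.

Lemma gcoef1 : gcoef 1 = pa.
Proof.
apply/polyP => k; rewrite gcoef_coef.
have -> : pa = pa * 1 by rewrite mulr1.
rewrite coef_a coef1; case: k => [|[|k]] //=.
  by rewrite coef1 /= binn exp1n mul1n expn1 add0r mulr1.
by rewrite coef1 bin_small.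
Qed.

Definition sL n := series_mul gcoef gcoef n.
Definition VL n := \sum_(i < n.+1) i%:R * (gcoef i * gcoef (n - i)).

Lemma VL_sym n : n%:R * sL n = 2%:R * VL n.
Proof.
have e : VL n = \sum_(i < n.+1) (n - i)%:R * (gcoef i * gcoef (n - i)).
  rewrite /VL (reindex_inj rev_ord_inj) /=; apply: eq_bigr => i _.
  rewrite subSS subKn; last by rewrite -ltnS ltn_ord.
  by rewrite [gcoef (n - i) * _]mulrC.
have -> : 2%:R * VL n = VL n + VL n by ring.
rewrite {2}e /VL -big_split /sL /series_mul mulr_sumr.
apply: eq_bigr => i _.
rewrite -{1}(subnKC (_ : (i <= n)%N)) ?natrD ?mulrDl //.
by rewrite -ltnS ltn_ord.
Qed.

Lemma VL_S n : VL n.+1 = \sum_(j < n.+1) (j.+1)%:R * (gcoef j.+1 * gcoef (n - j)).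
Proof.
rewrite /VL big_ord_recl /= mul0r add0r; apply: eq_bigr => j _.
by rewrite /bump /= add1n subSS.
Qed.

Lemma sL_S n : sL n.+1 = gcoef n.+1 + \sum_(j < n.+1) gcoef j.+1 * gcoef (n - j).
Proof.
rewrite /sL /series_mul big_ord_recl /= gcoef0 mul1r subn0; congr (_ + _).
Qed.

Lemma comb4 m (A B C D : 'I_m -> {poly int}) (x y : {poly int}) :
  x * (2%:R * \sum_j A j + \sum_j B j) - y * (\sum_j C j + \sum_j D j) =
  \sum_j (x * (2%:R * A j + B j) - y * (C j + D j)).
Proof. by rewrite sumrB !mulr_sumr -!big_split /= !mulr_sumr. Qed.

Lemma VL_SS n : VL n.+2 =
  pa * (2%:R * VL n.+1 + sL n.+1) - pb * (VL n + sL n).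
Proof.
rewrite (sL_S n) [VL n.+1]VL_S [VL n.+2]VL_S big_ord_recl /= gcoef1 subn0 mul1r.
rewrite /VL /sL /series_mul.
transitivity (pa * gcoef n.+1 + (pa * (2%:R * \sum_(j < n.+1) (j.+1)%:R * (gcoef j.+1 * gcoef (n - j))
   + \sum_(j < n.+1) gcoef j.+1 * gcoef (n - j)) - pb * (\sum_(j < n.+1) j%:R * (gcoef j * gcoef (n - j))
   + \sum_(j < n.+1) gcoef j * gcoef (n - j)))); last by ring.
congr (_ + _); rewrite comb4; apply: eq_bigr => j _.
rewrite /bump /= add1n subSS mulrA grec.
ring.
Qed.

Lemma sL_rec n : sL n.+2 = 2%:R * pa * sL n.+1 - pb * sL n.
Proof.
apply: (@natmul_cancel n.+1).
rewrite VL_sym VL_SS.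
have -> : 2%:R * (pa * (2%:R * VL n.+1 + sL n.+1) - pb * (VL n + sL n)) =
  pa * (2%:R * (2%:R * VL n.+1) + 2%:R * sL n.+1) - pb * (2%:R * VL n + 2%:R * sL n) by ring.
rewrite -!VL_sym; ring.
Qed.

Lemma sL0 : sL 0 = 1.
Proof. by rewrite /sL /series_mul big_ord1 /= gcoef0 mulr1. Qed.

Lemma sL1 : sL 1 = 2%:R * pa.
Proof. rewrite /sL /series_mul !big_ord_recr big_ord0 /= gcoef0 gcoef1; ring. Qed.

Lemma Pser_big k : (2 < k)%N -> Pser k = 0.
Proof. by case: k => [|[|[|k]]]. Qed.

Theorem mainTheorem14 : is_inv_sqrt gcoef Pser.
Proof.
split; first exact: gcoef0.
apply: functional_extensionality => n.
rewrite /series_one (_ : series_mul gcoef gcoef = sL) //.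
case: n => [|[|m]].
- by rewrite /series_mul big_ord1 /= sL0 mulr1.
- rewrite /series_mul !big_ord_recr big_ord0 /= sL0 sL1 /pa /Pser /=; ring.
rewrite /series_mul !big_ord_recr /=.
rewrite big1; last first.
  move=> i _; rewrite Pser_big ?mulr0 //=; have := ltn_ord i; lia.
have -> : (m.+2 - m = 2)%N by lia.
have -> : (m.+2 - m.+1 = 1)%N by lia.
rewrite subnn sL_rec /pa /pb /Pser /=; ring.
Qed.
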